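(* For all $n\geq1$ and every $2$-homogeneous polynomial $P(x)=\sum_{|\alpha|=2}a_\alpha\mathbf{x}^\alpha$ on $\ell_2^n$ over the complex field, \[ \max_{|\alpha|=2}|a_\alpha|\leq\frac{4}{\sqrt\pi}\|P\|. \] Moreover, for every $r<\infty$ there is no constant $C\ge1$ independent of $n$ such that $\big(\sum_{|\alpha|=2}|a_\alpha|^r\big)^{1/r}\le C\|P\|$ for all complex $2$-homogeneous polynomials $P$ on $\ell_2^n$ and all $n$.
   Context: For $\alpha\in\mathbb{N}^n$, $|\alpha|=\alpha_1+\cdots+\alpha_n$ and $\mathbf{x}^\alpha=x_1^{\alpha_1}\cdots x_n^{\alpha_n}$. $\ell_2^n$ is $\mathbb{C}^n$ with the Euclidean norm, and $\|P\|=\sup\{|P(x)|:\|x\|_2\le1\}$. *)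

(* Defs.v *)
From Stdlib Require Import Reals.
Open Scope R_scope.

Definition Cplx := (R * R)%type.
Definition C0 : Cplx := (0, 0).
Definition Cadd (z w : Cplx) : Cplx := (fst z + fst w, snd z + snd w).
Definition Cmul (z w : Cplx) : Cplx :=
  (fst z * fst w - snd z * snd w, fst z * snd w + snd z * fst w).
Definition Cmod (z : Cplx) : R := sqrt (fst z ^ 2 + snd z ^ 2).

Fixpoint Csum (n : nat) (f : nat -> Cplx) : Cplx :=
  match n with O => C0 | S k => Cadd (Csum k f) (f k) end.
Fixpoint Rsum (n : nat) (f : nat -> R) : R :=
  match n with O => 0 | S k => Rsum k f + f k end.

(* A 2-homogeneous polynomial on C^n: multi-indices alpha with |alpha| = 2
   correspond bijectively to pairs (i,j) with i <= j < n, x^alpha = x_i x_j.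
   The coefficient a_alpha is  a i j  (values of a at other pairs are ignored). *)
Definition hom2 (n : nat) (a : nat -> nat -> Cplx) (x : nat -> Cplx) : Cplx :=
  Csum n (fun i => Csum n (fun j =>
    if Nat.leb i j then Cmul (a i j) (Cmul (x i) (x j)) else C0)).

Definition in_unit_ball (n : nat) (x : nat -> Cplx) : Prop :=
  Rsum n (fun i => Cmod (x i) ^ 2) <= 1.

Definition is_Pnorm (n : nat) (a : nat -> nat -> Cplx) (N : R) : Prop :=
  is_lub (fun t => exists x, in_unit_ball n x /\ t = Cmod (hom2 n a x)) N.

Definition rpow (t r : R) : R := if Rlt_dec 0 t then Rpower t r else 0.

Definition coef_lr (n : nat) (a : nat -> nat -> Cplx) (r : R) : R :=
  rpow (Rsum n (fun i => Rsum n (fun j =>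
          if Nat.leb i j then rpow (Cmod (a i j)) r else 0))) (1 / r).

(* Main.v *)
Require Import Defs.
From Stdlib Require Import Reals Lra Lia ZArith.
From Coquelicot Require Complex.
Open Scope R_scope.

Lemma Cmod_tri (x y : Cplx) : Cmod (Cadd x y) <= Cmod x + Cmod y.
Proof. exact (Complex.Cmod_triangle x y). Qed.
Lemma Cmod_mul (x y : Cplx) : Cmod (Cmul x y) = Cmod x * Cmod y.
Proof. exact (Complex.Cmod_mult x y). Qed.
Lemma Cmod_ge0 (x : Cplx) : 0 <= Cmod x.
Proof. apply sqrt_pos. Qed.
Lemma Cmod_neg (x : Cplx) : Cmod (- fst x, - snd x) = Cmod x.
Proof. unfold Cmod; simpl; f_equal; ring. Qed.
Lemma Cmod_real (s : R) : 0 <= s -> Cmod (s, 0) = s.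
Proof. intro; unfold Cmod; simpl. replace (s*(s*1)+0*(0*1)) with (s*s) by ring. now apply sqrt_square. Qed.
Lemma Cmod_C0 : Cmod C0 = 0.
Proof. unfold Cmod, C0; simpl. replace (0*(0*1)+0*(0*1)) with 0 by ring. apply sqrt_0. Qed.
Lemma Cmod_sq (x : Cplx) : Cmod x ^ 2 = fst x ^ 2 + snd x ^ 2.
Proof. unfold Cmod. rewrite <- Rsqr_pow2. apply Rsqr_sqrt. nra. Qed.

Lemma Csum_zero n f : (forall k, (k < n)%nat -> f k = C0) -> Csum n f = C0.
Proof.
  induction n; intros H; simpl; auto.
  rewrite IHn by (intros; apply H; lia). rewrite H by lia. unfold Cadd, C0; simpl; f_equal; ring.
Qed.
Lemma Csum_one n f i : (i < n)%nat -> (forall k, (k < n)%nat -> k <> i -> f k = C0) -> Csum n f = f i.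
Proof.
  induction n; intros Hi H; [lia|]; simpl.
  destruct (Nat.eq_dec n i) as [->|Hne].
  - rewrite Csum_zero by (intros; apply H; lia). destruct (f i); unfold Cadd, C0; simpl; f_equal; ring.
  - rewrite IHn by (try lia; intros; apply H; lia). rewrite (H n) by lia.
    destruct (f i); unfold Cadd, C0; simpl; f_equal; ring.
Qed.
Lemma Csum_two n f i j : (i < j)%nat -> (j < n)%nat ->
  (forall k, (k < n)%nat -> k <> i -> k <> j -> f k = C0) -> Csum n f = Cadd (f i) (f j).
Proof.
  induction n; intros Hij Hj H; [lia|]; simpl.
  destruct (Nat.eq_dec n j) as [->|Hne].
  - rewrite (Csum_one j f i) by (try lia; intros; apply H; lia). reflexivity.
  - rewrite IHn by (try lia; intros; apply H; lia). rewrite (H n) by lia.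
    destruct (f i), (f j); unfold Cadd, C0; simpl; f_equal; ring.
Qed.
Lemma Rsum_zero n f : (forall k, (k < n)%nat -> f k = 0) -> Rsum n f = 0.
Proof.
  induction n; intros H; simpl; auto.
  rewrite IHn by (intros; apply H; lia). rewrite H by lia. ring.
Qed.
Lemma Rsum_one n f i : (i < n)%nat -> (forall k, (k < n)%nat -> k <> i -> f k = 0) -> Rsum n f = f i.
Proof.
  induction n; intros Hi H; [lia|]; simpl.
  destruct (Nat.eq_dec n i) as [->|Hne].
  - rewrite Rsum_zero by (intros; apply H; lia). ring.
  - rewrite IHn by (try lia; intros; apply H; lia). rewrite (H n) by lia. ring.
Qed.
Lemma Rsum_two n f i j : (i < j)%nat -> (j < n)%nat ->
  (forall k, (k < n)%nat -> k <> i -> k <> j -> f k = 0) -> Rsum n f = f i + f j.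
Proof.
  induction n; intros Hij Hj H; [lia|]; simpl.
  destruct (Nat.eq_dec n j) as [->|Hne].
  - rewrite (Rsum_one j f i) by (try lia; intros; apply H; lia). reflexivity.
  - rewrite IHn by (try lia; intros; apply H; lia). rewrite (H n) by lia. ring.
Qed.
Lemma Rsum_const n : Rsum n (fun _ => 1) = INR n.
Proof. induction n; simpl Rsum; [simpl; ring|]. rewrite IHn, S_INR. ring. Qed.
Lemma Csum_bound n f : Cmod (Csum n f) <= Rsum n (fun k => Cmod (f k)).
Proof.
  induction n; simpl.
  - rewrite Cmod_C0; lra.
  - eapply Rle_trans; [apply Cmod_tri|]. lra.
Qed.
Lemma Rsum_ext n f g : (forall k, (k<n)%nat -> f k = g k) -> Rsum n f = Rsum n g.
Proof. induction n; intros H; simpl; auto. rewrite IHn, H by (auto; lia). auto. Qed.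
Lemma Csum_ext n f g : (forall k, (k<n)%nat -> f k = g k) -> Csum n f = Csum n g.
Proof. induction n; intros H; simpl; auto. rewrite IHn, H by (auto; lia). auto. Qed.
Definition adiag (i j : nat) : Cplx := if Nat.eqb i j then (1,0) else C0.
Definition e0 (k : nat) : Cplx := if Nat.eqb k 0 then (1,0) else C0.

Lemma hom2_diag n x : hom2 n adiag x = Csum n (fun i => Cmul (x i) (x i)).
Proof.
  unfold hom2; apply Csum_ext; intros i Hi.
  rewrite (Csum_one n _ i); auto.
  2:{ intros k Hk Hne; unfold adiag. destruct (Nat.leb i k); auto.
      rewrite (proj2 (Nat.eqb_neq i k)) by auto.
      destruct (Cmul (x i) (x k)); unfold Cmul, C0; simpl; f_equal; ring. }
  rewrite Nat.leb_refl. unfold adiag; rewrite Nat.eqb_refl.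
  destruct (Cmul (x i) (x i)); unfold Cmul; simpl; f_equal; ring.
Qed.

Lemma diag_norm n : (1 <= n)%nat -> is_Pnorm n adiag 1.
Proof.
  intro Hn. split.
  - intros t [x [Hx ->]]. rewrite hom2_diag. eapply Rle_trans; [apply Csum_bound|].
    eapply Rle_trans; [|apply Hx]. right. apply Rsum_ext; intros k _.
    rewrite Cmod_mul; simpl; ring.
  - intros b Hb. apply Hb. exists e0. split.
    + unfold in_unit_ball. rewrite (Rsum_one n _ 0) by (try lia; intros k _ Hk;
        unfold e0; rewrite (proj2 (Nat.eqb_neq k 0)) by auto; rewrite Cmod_C0; ring).
      unfold e0; simpl. unfold Cmod; simpl. replace (1*(1*1)+0*(0*1)) with 1 by ring. rewrite sqrt_1. lra.
    + rewrite hom2_diag. rewrite (Csum_one n _ 0) by (try lia; intros k _ Hk;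
        unfold e0; rewrite (proj2 (Nat.eqb_neq k 0)) by auto; unfold Cmul, C0; simpl; f_equal; ring).
      unfold e0; simpl. unfold Cmod, Cmul; simpl.
      match goal with |- _ = sqrt ?e => replace e with 1 by ring end. now rewrite sqrt_1.
Qed.

Lemma diag_coef n r : (1 <= n)%nat -> 0 < r -> coef_lr n adiag r = Rpower (INR n) (1/r).
Proof.
  intros Hn Hr. unfold coef_lr.
  rewrite (Rsum_ext n _ (fun _ => 1)).
  - rewrite Rsum_const. unfold rpow. destruct (Rlt_dec 0 (INR n)); auto.
    exfalso; apply n0; apply lt_0_INR; lia.
  - intros i Hi. rewrite (Rsum_one n _ i); auto.
    2:{ intros k Hk Hne; destruct (Nat.leb i k); auto.
      unfold adiag; rewrite (proj2 (Nat.eqb_neq i k)) by auto; rewrite Cmod_C0; unfold rpow.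
      destruct (Rlt_dec 0 0); [lra|auto]. }
    rewrite Nat.leb_refl; unfold adiag; rewrite Nat.eqb_refl, Cmod_real by lra.
    unfold rpow; destruct (Rlt_dec 0 1); [|lra]. unfold Rpower; rewrite ln_1, Rmult_0_r; apply exp_0.
Qed.

Lemma part2 : forall r : R, 0 < r ->
     ~ (exists Cst : R, 1 <= Cst /\
          forall (n : nat) (a : nat -> nat -> Cplx) (N : R),
            (1 <= n)%nat -> is_Pnorm n a N ->
            coef_lr n a r <= Cst * N).
Proof.
  intros r Hr [C [HC H]].
  destruct (archimed (Rpower C r)) as [Hup _].
  set (n := S (Z.to_nat (up (Rpower C r)))).
  assert (Hn : INR n > Rpower C r).
  { unfold n. rewrite S_INR.
    assert (0 < up (Rpower C r))%Z by (apply lt_IZR; pose proof (exp_pos (r * ln C)); unfold Rpower in *; lra).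
    rewrite INR_IZR_INZ, Z2Nat.id by lia. lra. }
  specialize (H n adiag 1 ltac:(unfold n; lia) (diag_norm n ltac:(unfold n; lia))).
  rewrite diag_coef in H by (unfold n; lia || auto).
  assert (Rpower (Rpower C r) (1/r) < Rpower (INR n) (1/r)).
  { apply Rlt_Rpower_l. apply Rdiv_lt_0_compat; lra. split; [apply exp_pos|lra]. }
  rewrite Rpower_mult in H0. replace (r * (1/r)) with 1 in H0 by (field; lra).
  rewrite Rpower_1 in H0 by lra. lra.
Qed.
Definition Cneg (z : Cplx) : Cplx := (- fst z, - snd z).

Lemma term_zero_l (a : Cplx) y z : y = C0 -> Cmul a (Cmul y z) = C0.
Proof. intros ->; destruct a, z; unfold Cmul, C0; simpl; f_equal; ring. Qed.
Lemma term_zero_r (a : Cplx) y z : z = C0 -> Cmul a (Cmul y z) = C0.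
Proof. intros ->; destruct a, y; unfold Cmul, C0; simpl; f_equal; ring. Qed.

Lemma row_zero n (a : nat -> nat -> Cplx) x k : x k = C0 ->
  Csum n (fun l => if Nat.leb k l then Cmul (a k l) (Cmul (x k) (x l)) else C0) = C0.
Proof. intros H; apply Csum_zero; intros l _; destruct (Nat.leb k l); auto. now apply term_zero_l. Qed.

Definition ei (i k : nat) : Cplx := if Nat.eqb k i then (1,0) else C0.
Definition xs (i j : nat) (s sg : R) (k : nat) : Cplx :=
  if Nat.eqb k i then (s,0) else if Nat.eqb k j then (sg*s,0) else C0.

Lemma ub n a N x : is_Pnorm n a N -> in_unit_ball n x -> Cmod (hom2 n a x) <= N.
Proof. intros [H _] Hx. apply H. eauto. Qed.

Lemma diag_case n a N i : is_Pnorm n a N -> (i < n)%nat -> Cmod (a i i) <= N.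
Proof.
  intros HN Hi.
  assert (Hb : in_unit_ball n (ei i)).
  { unfold in_unit_ball. rewrite (Rsum_one n _ i); auto.
    2:{ intros k _ Hk; unfold ei; rewrite (proj2 (Nat.eqb_neq k i)) by auto; rewrite Cmod_C0; ring. }
    unfold ei; rewrite Nat.eqb_refl, Cmod_real by lra. lra. }
  pose proof (ub _ _ _ _ HN Hb) as H.
  unfold hom2 in H. rewrite (Csum_one n _ i) in H; auto.
  2:{ intros k _ Hk; apply row_zero. unfold ei; now rewrite (proj2 (Nat.eqb_neq k i)). }
  rewrite (Csum_one n _ i) in H; auto.
  2:{ intros k _ Hk; destruct (Nat.leb i k); auto; apply term_zero_r.
      unfold ei; now rewrite (proj2 (Nat.eqb_neq k i)). }
  rewrite Nat.leb_refl in H. unfold ei in H; rewrite Nat.eqb_refl in H.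
  rewrite Cmod_mul in H. replace (Cmul (1,0) (1,0)) with ((1,0):Cplx) in H
    by (unfold Cmul; simpl; f_equal; ring). rewrite Cmod_real in H; lra.
Qed.

Lemma hom2_xs n a i j s sg : (i < j)%nat -> (j < n)%nat ->
  hom2 n a (xs i j s sg) =
  Cadd (Cadd (Cmul (a i i) (Cmul (s,0) (s,0))) (Cmul (a i j) (Cmul (s,0) (sg*s,0))))
       (Cmul (a j j) (Cmul (sg*s,0) (sg*s,0))).
Proof.
  intros Hij Hj.
  assert (Xi : xs i j s sg i = (s,0)) by (unfold xs; now rewrite Nat.eqb_refl).
  assert (Xj : xs i j s sg j = (sg*s,0)) by
    (unfold xs; rewrite (proj2 (Nat.eqb_neq j i)) by lia; now rewrite Nat.eqb_refl).
  assert (Xo : forall k, k <> i -> k <> j -> xs i j s sg k = C0) by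
    (intros k H1 H2; unfold xs; now rewrite (proj2 (Nat.eqb_neq k i)), (proj2 (Nat.eqb_neq k j))).
  unfold hom2. rewrite (Csum_two n _ i j); auto.
  2:{ intros k _ H1 H2; apply row_zero; auto. }
  rewrite (Csum_two n _ i j); auto.
  2:{ intros k _ H1 H2; destruct (Nat.leb i k); auto; apply term_zero_r; auto. }
  rewrite (Csum_one n _ j); auto.
  2:{ intros k _ H1. destruct (Nat.eq_dec k i) as [->|H2].
      - rewrite (proj2 (Nat.leb_gt j i)) by lia; auto.
      - destruct (Nat.leb j k); auto; apply term_zero_r; auto. }
  rewrite !Nat.leb_refl, (proj2 (Nat.leb_le i j)) by lia.
  now rewrite Xi, Xj.
Qed.

Lemma off_case n a N i j : is_Pnorm n a N -> (i < j)%nat -> (j < n)%nat -> Cmod (a i j) <= 2 * N.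
Proof.
  intros HN Hij Hj.
  set (s := sqrt (/2)).
  assert (Hs : s * s = /2) by (apply sqrt_sqrt; lra).
  assert (Hs0 : 0 <= s) by apply sqrt_pos.
  assert (Hb : forall sg, sg * sg = 1 -> in_unit_ball n (xs i j s sg)).
  { intros sg Hsg. unfold in_unit_ball. rewrite (Rsum_two n _ i j); auto.
    2:{ intros k _ H1 H2; unfold xs; rewrite (proj2 (Nat.eqb_neq k i)), (proj2 (Nat.eqb_neq k j)) by auto.
        rewrite Cmod_C0; ring. }
    unfold xs. rewrite Nat.eqb_refl, (proj2 (Nat.eqb_neq j i)) by lia. rewrite Nat.eqb_refl.
    rewrite !Cmod_sq; simpl.
    replace ((s * (s * 1) + 0 * (0 * 1)) + (sg * s * (sg * s * 1) + 0 * (0 * 1)))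
      with (s*s + (sg*sg)*(s*s)) by ring. rewrite Hsg, Hs. lra. }
  pose proof (ub _ _ _ _ HN (Hb 1 ltac:(ring))) as H1.
  pose proof (ub _ _ _ _ HN (Hb (-1) ltac:(ring))) as H2.
  rewrite hom2_xs in H1, H2 by auto.
  set (P1 := Cadd _ _) in H1. set (P2 := Cadd _ _) in H2.
  assert (E : Cadd P1 (Cneg P2) = Cmul (2*(s*s),0) (a i j)).
  { unfold P1, P2, Cneg. destruct (a i i), (a i j), (a j j).
    unfold Cadd, Cmul; simpl; f_equal; ring. }
  pose proof (Cmod_tri P1 (Cneg P2)) as T. rewrite E in T.
  unfold Cneg in T; rewrite Cmod_neg, Cmod_mul, Cmod_real in T by lra.
  rewrite Hs in T. lra.
Qed.

Lemma part1 : forall (n : nat) (a : nat -> nat -> Cplx) (N : R),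
      (1 <= n)%nat -> is_Pnorm n a N ->
      forall i j : nat, (i <= j)%nat -> (j < n)%nat ->
        Cmod (a i j) <= 4 / sqrt PI * N.
Proof.
  intros n a N Hn HN i j Hij Hj.
  assert (HN0 : 0 <= N).
  { eapply Rle_trans; [apply (Cmod_ge0 (a j j))|]. apply (diag_case n); auto. }
  assert (Hp : 2 <= 4 / sqrt PI).
  { pose proof PI_RGT_0. assert (0 < sqrt PI) by (apply sqrt_lt_R0; lra).
    assert (sqrt PI <= 2).
    { rewrite <- (sqrt_square 2) by lra. apply sqrt_le_1_alt. pose proof PI_4. lra. }
    apply (Rmult_le_reg_r (sqrt PI)); auto. unfold Rdiv. rewrite Rmult_assoc, Rinv_l by lra. lra. }
  assert (Cmod (a i j) <= 2 * N).
  { destruct (Nat.eq_dec i j) as [->|Hne].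
    - pose proof (diag_case n a N j HN Hj); lra.
    - apply (off_case n); auto; lia. }
  nra.
Qed.

Theorem proposition3 :
  (forall (n : nat) (a : nat -> nat -> Cplx) (N : R),
      (1 <= n)%nat -> is_Pnorm n a N ->
      forall i j : nat, (i <= j)%nat -> (j < n)%nat ->
        Cmod (a i j) <= 4 / sqrt PI * N)
  /\
  (forall r : R, 0 < r ->
     ~ (exists Cst : R, 1 <= Cst /\
          forall (n : nat) (a : nat -> nat -> Cplx) (N : R),
            (1 <= n)%nat -> is_Pnorm n a N ->
            coef_lr n a r <= Cst * N)).
Proof. split; [exact part1 | exact part2]. Qed.
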